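(* Let $\rho_{1,n},\rho_{2,n}>0$ and $c_n=o(1)$ be such that \begin{align*} &\mathbb{P}\Big(\max_{e\in\mathcal{E}_{tr}}\sup_{u\in\mathcal{F}_w,\Phi\in\mathcal{F}_{\Phi}}\big|\tfrac{1}{n_e}\langle u\circ\Phi(X^e),\bm{y}^e\rangle-\mathbb{E}[ u\circ\Phi(\bm{x}^{e})\,y^{e}]\big|\leq \tfrac{\rho_{1,n}}{2}\Big)\geq 1-c_n,\\ &\mathbb{P}\Big(\max_{e\in\mathcal{E}_{tr}}\sup_{u\in\mathcal{F}_w,\Phi\in\mathcal{F}_{\Phi}}\big|\tfrac{1}{n_e}\textstyle\sum_{i=1}^{n_e}\{u\circ\Phi(\bm{x}_i^e)\}^2-\mathbb{E}[\{u\circ\Phi(\bm{x}^{e})\}^2]\big|\leq \tfrac{\rho_{2,n}}{2}\Big)\geq 1-c_n . \end{align*} Suppose that for all $\Phi\in\mathcal F_\Phi\setminus\mathcal I^*_\Phi$, either $\max_{e,e'\in\mathcal{E}_{tr}} \sup_{u\in\mathcal{F}_{w}}|\mathbb{E}[ u\circ\Phi(\bm{x}^e)y^e]-\mathbb{E}[u\circ\Phi(\bm{x}^{e'})y^{e'}]|>2\rho_{1,n}$ or $\max_{e,e'\in\mathcal{E}_{tr}} \sup_{u\in\mathcal{F}_{w}} |\mathbb{E}[\{ u\circ\Phi(\bm{x}^e)\}^2]-\mathbb{E}[\{ u\circ\Phi(\bm{x}^{e'})\}^2]|>2\rho_{2,n}$, and that $\mathcal I^*_\Phi\neq\emptyset$.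 Then, with probability at least $1-2c_n$, the empirical FAIRM estimator (with tuning parameters $\rho_{1,n},\rho_{2,n}$) satisfies \[ \max_{e\in\mathcal{E}_{all}}\{R^e(\hat{w}^{(\mathrm{FAIRM})}\circ\widehat{\Phi}^{(\mathrm{FAIRM})})-R^e(w^*\circ\Phi^* )\}\leq 4\rho_{1,n}+2\rho_{2,n}. \]
   Context: Finite set of environments $\mathcal E_{all}\supseteq\mathcal E_{tr}$; for each $e$, $(\bm x^e,y^e)\in\mathbb R^p\times\mathbb R$ has distribution $P^e$; weights $\alpha^*_e>0$ on $\mathcal E_{all}$ summing to one. For each $e\in\mathcal E_{tr}$ we observe $n_e$ i.i.d. samples $(\bm x^e_i,y^e_i)\sim P^e$, forming $X^e\in\mathbb R^{n_e\times p}$ and $\bm y^e\in\mathbb R^{n_e}$; $f(X^e)$ denotes the vector $(f(\bm x^e_i))_{i}$. $\mathcal F_\Phi$: class of representations $\Phi:\mathbb R^p\to\mathcal H$; $\mathcal F_w$: class of functions $\mathcal H\to\mathbb R$. $R^e(f)=\mathbb E[(y-f(\bm x))^2]$ for $(\bm x,y)\sim P^e$ independent of $f$. $\mathcal I^*_\Phi$: the set of $\Phi\in\mathcal F_\Phi$ with $\max_{e,e'\in\mathcal E_{all}}\sup_{u\in\mathcal F_w}|\mathbb E[u\circ\Phi(\bm x^e)y^e]-\mathbb E[u\circ\Phi(\bm x^{e'})y^{e'}]|=0$ and $\max_{e,e'\in\mathcal E_{all}}\sup_{u\in\mathcal F_w}|\mathbb E[\{u\circ\Phi(\bm x^e)\}^2]-\mathbb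 E[\{u\circ\Phi(\bm x^{e'})\}^2]|=0$. Full-info FAIRM: $(w^*,\Phi^* )\in\arg\min_{w\in\mathcal F_w,\Phi\in\mathcal I^*_\Phi}\sum_{e\in\mathcal E_{all}}\alpha^*_e\mathbb E[(y^e-w\circ\Phi(\bm x^e))^2]$. Empirical FAIRM: $(\hat w^{(\mathrm{FAIRM})},\widehat\Phi^{(\mathrm{FAIRM})})\in\arg\min_{w\in\mathcal F_w,\Phi\in\mathcal F_\Phi}\sum_{e\in\mathcal E_{tr}}\|\bm y^e-w\circ\Phi(X^e)\|_2^2$ subject to $\max_{e,e'\in\mathcal E_{tr}}\sup_{u\in\mathcal F_w}|\frac1{n_e}\langle u\circ\Phi(X^e),\bm y^e\rangle-\frac1{n_{e'}}\langle u\circ\Phi(X^{e'}),\bm y^{e'}\rangle|\le\rho_{1,n}$ and $\max_{e,e'\in\mathcal E_{tr}}\sup_{u\in\mathcal F_w}|\frac1{n_e}\sum_{i=1}^{n_e}\{u\circ\Phi(\bm x^e_i)\}^2-\frac1{n_{e'}}\sum_{i=1}^{n_{e'}}\{u\circ\Phi(\bm x^{e'}_i)\}^2|\le\rho_{2,n}$. *)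

(* Defs.v *)
From mathcomp Require Import all_boot all_order all_algebra.
From mathcomp Require Import all_classical all_reals all_analysis.
Set Implicit Arguments.
Unset Strict Implicit.
Unset Printing Implicit Defensive.
Import Order.TTheory GRing.Theory Num.Theory.
Local Open Scope classical_set_scope.
Local Open Scope ring_scope.

(* Conventions:
   - covariates x live in R^p, represented as [p.-tuple R] with the product
     sigma-algebra; an observation is a pair z = (x, y) : [p.-tuple R * R];
   - the set of all environments E_all is a finite type [Env], the training
     environments form a subset [Etr : {set Env}];
   - P^e is a probability measure [Pe e] on [p.-tuple R * R];
   - representations are functions [p.-tuple R -> H] for an arbitrary type H,
     the classes F_Phi, F_w are (classical) sets of functions. *)

Section FAIRM.
Variables (R : realType) (p : nat) (Env : finType) (H : Type).

Local Notation Z := (p.-tuple R * R)%type.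

(* E[g(x^e, y^e)] for (x^e, y^e) ~ Q (real-valued; finite under the
   square-integrability assumptions of the theorem). *)
Definition expect (Q : probability Z R) (g : Z -> R) : R :=
  fine (\int[Q]_z (g z)%:E).

Definition risk (Q : probability Z R) (f : p.-tuple R -> R) : R :=
  expect Q (fun z => (z.2 - f z.1) ^+ 2).

Definition supR (S : set R) : \bar R := ereal_sup (EFin @` S).

Definition maxsup_dev (E : {set Env}) (Fw : set (H -> R))
    (a : Env -> (H -> R) -> R) : \bar R :=
  supR [set r | exists e e' u,
           [/\ e \in E, e' \in E, Fw u & r = `|a e u - a e' u|] ].

Definition pop1 (Pe : Env -> probability Z R) (Phi : p.-tuple R -> H)
    (e : Env) (u : H -> R) : R := expect (Pe e) (fun z => u (Phi z.1) * z.2).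
Definition pop2 (Pe : Env -> probability Z R) (Phi : p.-tuple R -> H)
    (e : Env) (u : H -> R) : R := expect (Pe e) (fun z => (u (Phi z.1)) ^+ 2).

Definition Istar (Pe : Env -> probability Z R) (FPhi : set (p.-tuple R -> H))
    (Fw : set (H -> R)) (Phi : p.-tuple R -> H) : Prop :=
  [/\ FPhi Phi,
      maxsup_dev [set: Env] Fw (pop1 Pe Phi) = 0%E &
      maxsup_dev [set: Env] Fw (pop2 Pe Phi) = 0%E ].

Definition full_FAIRM (Pe : Env -> probability Z R) (alpha : Env -> R)
    (FPhi : set (p.-tuple R -> H)) (Fw : set (H -> R))
    (w : H -> R) (Phi : p.-tuple R -> H) : Prop :=
  [/\ Fw w, Istar Pe FPhi Fw Phi &
      forall w' Phi', Fw w' -> Istar Pe FPhi Fw Phi' ->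
        \sum_(e : Env) alpha e * risk (Pe e) (w \o Phi)
        <= \sum_(e : Env) alpha e * risk (Pe e) (w' \o Phi') ].

Section Sample.
Context {d : measure_display} {Omega : measurableType d}.
Variables (n : Env -> nat) (sample : forall e : Env, 'I_(n e) -> Omega -> Z).

Definition emp1 (Phi : p.-tuple R -> H) (w : Omega) (e : Env) (u : H -> R) : R :=
  (n e)%:R^-1 * \sum_(i < n e) u (Phi (sample i w).1) * (sample i w).2.
Definition emp2 (Phi : p.-tuple R -> H) (w : Omega) (e : Env) (u : H -> R) : R :=
  (n e)%:R^-1 * \sum_(i < n e) (u (Phi (sample i w).1)) ^+ 2.

Definition emp_loss (Etr : {set Env}) (wf : H -> R) (Phi : p.-tuple R -> H)
    (w : Omega) : R :=
  \sum_(e in Etr) \sum_(i < n e) ((sample i w).2 - wf (Phi (sample i w).1)) ^+ 2.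

Definition emp_constraints (Etr : {set Env}) (FPhi : set (p.-tuple R -> H))
    (Fw : set (H -> R)) (rho1 rho2 : R) (Phi : p.-tuple R -> H) (w : Omega) :=
  [/\ FPhi Phi,
      (maxsup_dev Etr Fw (emp1 Phi w) <= rho1%:E)%E &
      (maxsup_dev Etr Fw (emp2 Phi w) <= rho2%:E)%E ].

Definition emp_FAIRM (Etr : {set Env}) (FPhi : set (p.-tuple R -> H))
    (Fw : set (H -> R)) (rho1 rho2 : R) (w : Omega)
    (wh : H -> R) (Phih : p.-tuple R -> H) : Prop :=
  [/\ Fw wh, emp_constraints Etr FPhi Fw rho1 rho2 Phih w &
      forall w' Phi', Fw w' -> emp_constraints Etr FPhi Fw rho1 rho2 Phi' w ->
        emp_loss Etr wh Phih w <= emp_loss Etr w' Phi' w ].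

Definition iid_samples (P : probability Omega R) (Etr : {set Env})
    (Pe : Env -> probability Z R) : Prop :=
  [/\ forall e (i : 'I_(n e)), e \in Etr -> measurable_fun setT (sample i),
      forall e (i : 'I_(n e)) (B : set Z), e \in Etr -> measurable B ->
        P (sample i @^-1` B) = Pe e B &
      forall (J : {set {e : Env & 'I_(n e)}})
             (B : {e : Env & 'I_(n e)} -> set Z),
        (forall j, j \in J -> tag j \in Etr) ->
        (forall j, j \in J -> measurable (B j)) ->
        P (\bigcap_(j in [set` J]) (sample (tagged j) @^-1` B j)) =
        (\prod_(j in J) P (sample (tagged j) @^-1` B j))%E ].

(* "P(event) >= q", read as inner probability (the events below are defined
   through suprema over uncountable classes and need not be measurable):
   some measurable subevent has probability at least q. *)
Definition prob_ge (P : probability Omega R) (A : set Omega) (q : R) : Prop :=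
  exists2 B : set Omega, measurable B /\ B `<=` A & (q%:E <= P B)%E.

End Sample.
End FAIRM.

(* Main.v *)
Require Import Defs.
From mathcomp Require Import all_boot all_order all_algebra.
From mathcomp Require Import all_classical all_reals all_analysis.
From mathcomp Require Import ring lra.
Import Order.TTheory GRing.Theory Num.Theory.
Local Open Scope classical_set_scope.
Local Open Scope ring_scope.

Lemma expectD (R : realType) (p : nat) (Q : probability (p.-tuple R * R)%type R)
  (f g : (p.-tuple R * R)%type -> R) :
  Q.-integrable setT (EFin \o f) -> Q.-integrable setT (EFin \o g) ->
  expect Q (fun z => f z + g z) = expect Q f + expect Q g.
Proof.
move=> If Ig; rewrite /expect.
under eq_integral do rewrite EFinD.
rewrite (integralD_EFin measurableT If Ig) fineD //.
- exact: (integrable_fin_num measurableT If).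
- exact: (integrable_fin_num measurableT Ig).
Qed.

Lemma expectZ (R : realType) (p : nat) (Q : probability (p.-tuple R * R)%type R)
  (k : R) (f : (p.-tuple R * R)%type -> R) :
  Q.-integrable setT (EFin \o f) ->
  expect Q (fun z => k * f z) = k * expect Q f.
Proof.
move=> If; rewrite /expect.
under eq_integral do rewrite EFinM.
rewrite (integralZl measurableT If) fineM //.
exact: (integrable_fin_num measurableT If).
Qed.

Lemma integrableZ_EFin (R : realType) (p : nat) (Q : probability (p.-tuple R * R)%type R)
  (k : R) (f : (p.-tuple R * R)%type -> R) :
  Q.-integrable setT (EFin \o f) ->
  Q.-integrable setT (EFin \o (fun z => k * f z)).
Proof.
move=> If; apply: (eq_integrable measurableT _ _ _ (integrableZl measurableT k If)).
by move=> z _ /=; rewrite EFinM.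
Qed.

Lemma risk_decomp (R : realType) (p : nat) (Q : probability (p.-tuple R * R)%type R)
  (f : p.-tuple R -> R) :
  Q.-integrable [set: (p.-tuple R * R)%type] (fun z => (z.2 ^+ 2)%:E) ->
  measurable_fun [set: (p.-tuple R * R)%type] (fun z => f z.1) ->
  Q.-integrable [set: (p.-tuple R * R)%type] (fun z => ((f z.1) ^+ 2)%:E) ->
  risk Q f = expect Q (fun z => z.2 ^+ 2)
     - 2 * expect Q (fun z => f z.1 * z.2) + expect Q (fun z => (f z.1) ^+ 2).
Proof.
move=> Iy mf If.
have Ify : Q.-integrable setT (EFin \o (fun z => f z.1 * z.2)).
  apply: (le_integrable measurableT _ _ (integrableD measurableT Iy If)).
    apply/measurable_realfun.measurable_EFinP; apply: measurable_realfun.measurable_funM => //; exact: measurable_snd.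
  move=> z _ /=; rewrite lee_fin.
  rewrite [X in _ <= X]ger0_norm; last by rewrite addr_ge0 // sqr_ge0.
  rewrite ler_norml; apply/andP; split; nra.
have I2 := @integrableZ_EFin R p Q (-2) _ Ify.
rewrite /risk.
have -> : (fun z : (p.-tuple R * R)%type => (z.2 - f z.1) ^+ 2) =
  (fun z => (z.2 ^+ 2 + (-2) * (f z.1 * z.2)) + f z.1 ^+ 2).
  by apply: funext => z; ring.
rewrite expectD //; last first.
  apply: (eq_integrable measurableT _ _ _ (integrableD measurableT Iy I2)).
  by move=> z _ /=; rewrite EFinD.
rewrite expectD // expectZ //; ring.
Qed.
Lemma supR_ub (R : realType) (S : set R) (r x : R) :
  S r -> (supR S <= x%:E)%E -> r <= x.
Proof.
move=> Sr hs; rewrite -lee_fin; apply: le_trans hs.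
by apply: ereal_sup_ubound; exists r.
Qed.

Arguments supR_ub {R S r x}.

Lemma supR_le (R : realType) (S : set R) (x : R) :
  (forall r, S r -> r <= x) -> (supR S <= x%:E)%E.
Proof.
by move=> h; apply: ge_ereal_sup => _ [r Sr <-]; rewrite lee_fin h.
Qed.

Lemma abs_bound (R : realType) (a r : R) : `|a| <= r -> - r <= a /\ a <= r.
Proof. by rewrite ler_norml => /andP. Qed.

Lemma loss_decomp (R : realType) (p : nat) (Env : finType) (H : Type)
  (d : measure_display) (Omega : measurableType d) (n : Env -> nat)
  (sample : forall e : Env, 'I_(n e) -> Omega -> (p.-tuple R * R)%type)
  (Etr : {set Env}) (wf : H -> R) (Phi : p.-tuple R -> H) (w : Omega) :
  (forall e, e \in Etr -> (0 < n e)%N) ->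
  emp_loss sample Etr wf Phi w = \sum_(e in Etr)
    (\sum_(i < n e) (sample e i w).2 ^+ 2 +
     (n e)%:R * (-2 * emp1 sample Phi w e wf + emp2 sample Phi w e wf)).
Proof.
move=> npos; rewrite /emp_loss; apply: eq_bigr => e eE.
have nz : (n e)%:R != 0 :> R by rewrite pnatr_eq0 -lt0n npos.
have key : forall x : R, (n e)%:R * ((n e)%:R^-1 * x) = x.
  by move=> x; rewrite mulrA divff // mul1r.
rewrite /emp1 /emp2 mulrDr mulrCA !key.
rewrite mulr_sumr -!big_split /=; apply: eq_bigr => i _; ring.
Qed.

Lemma inv_of_dev0 (R : realType) (Env : finType) (H : Type) (Fw : set (H -> R))
  (a : Env -> (H -> R) -> R) :
  maxsup_dev [set: Env] Fw a = 0%E -> forall e e' u, Fw u -> a e u = a e' u.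
Proof.
move=> h e e' u Fu.
move/eqP: h; rewrite /maxsup_dev eq_le => /andP[hle _].
have := fun Sr => @supR_ub R _ `|a e u - a e' u| 0 Sr hle.
rewrite normr_le0 subr_eq0 => hh; apply/eqP; apply: hh.
by exists e, e', u; split; rewrite ?in_setT.
Qed.

Arguments inv_of_dev0 {R Env H Fw a}.

Theorem theorem1
  (R : realType) (p : nat) (Env : finType) (H : Type)
  (Etr : {set Env})
  (Pe : Env -> probability (p.-tuple R * R)%type R)
  (alpha : Env -> R)
  (FPhi : set (p.-tuple R -> H)) (Fw : set (H -> R))
  (d : measure_display) (Omega : measurableType d) (P : probability Omega R)
  (n : Env -> nat)
  (sample : forall e : Env, 'I_(n e) -> Omega -> (p.-tuple R * R)%type)
  (rho1 rho2 c : R)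
  (wstar : H -> R) (Phistar : p.-tuple R -> H) :
  (* weights alpha*_e > 0 summing to one *)
  (forall e, 0 < alpha e) -> \sum_(e : Env) alpha e = 1 ->
  (* finite second moments, so that all expectations are well defined *)
  (forall e, (Pe e).-integrable [set: (p.-tuple R * R)%type]
                (fun z => (z.2 ^+ 2)%:E)) ->
  (forall e u Phi, Fw u -> FPhi Phi ->
     measurable_fun [set: (p.-tuple R * R)%type] (fun z => u (Phi z.1)) /\
     (Pe e).-integrable [set: (p.-tuple R * R)%type]
        (fun z => ((u (Phi z.1)) ^+ 2)%:E)) ->
  (* sampling model *)
  Etr != finset.set0 ->
  (forall e, e \in Etr -> (0 < n e)%N) ->
  iid_samples sample P Etr Pe ->
  0 < rho1 -> 0 < rho2 ->
  (* uniform concentration *)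
  prob_ge P [set w | (supR [set r | exists e u Phi,
      [/\ e \in Etr, Fw u, FPhi Phi &
          (r = `|emp1 sample Phi w e u - pop1 Pe Phi e u|)%R ] ]
      <= (rho1 / 2)%R%:E)%E] (1 - c) ->
  prob_ge P [set w | (supR [set r | exists e u Phi,
      [/\ e \in Etr, Fw u, FPhi Phi &
          (r = `|emp2 sample Phi w e u - pop2 Pe Phi e u|)%R ] ]
      <= (rho2 / 2)%R%:E)%E] (1 - c) ->
  (* separation of non-invariant representations *)
  (forall Phi, FPhi Phi -> ~ Istar Pe FPhi Fw Phi ->
     (maxsup_dev Etr Fw (pop1 Pe Phi) > (2 * rho1)%R%:E)%E \/
     (maxsup_dev Etr Fw (pop2 Pe Phi) > (2 * rho2)%R%:E)%E) ->
  (exists Phi, Istar Pe FPhi Fw Phi) ->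
  (* wstar, Phistar : a full-information FAIRM solution *)
  full_FAIRM Pe alpha FPhi Fw wstar Phistar ->
  prob_ge P [set w | forall wh Phih,
      emp_FAIRM sample Etr FPhi Fw rho1 rho2 w wh Phih ->
      forall e : Env,
        risk (Pe e) (wh \o Phih) - risk (Pe e) (wstar \o Phistar)
        <= 4 * rho1 + 2 * rho2] (1 - 2 * c).
Proof.
move=> apos asum Iy Ifw Etr0 npos iid r1 r2 [B1 [mB1 sB1] PB1] [B2 [mB2 sB2] PB2]
  sep [Phi0 IPhi0] [wsF [FPs dev1s dev2s] _].
exists (B1 `&` B2); first split; first exact: measurableI.
- move=> w [/sB1 h1 /sB2 h2].
  have b1 : forall e u Phi, e \in Etr -> Fw u -> FPhi Phi ->
      - (rho1 / 2) <= emp1 sample Phi w e u - pop1 Pe Phi e u /\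
      emp1 sample Phi w e u - pop1 Pe Phi e u <= rho1 / 2.
    move=> e u Phi eE Fu FP; apply: abs_bound; apply: (supR_ub _ h1).
    by exists e, u, Phi.
  have b2 : forall e u Phi, e \in Etr -> Fw u -> FPhi Phi ->
      - (rho2 / 2) <= emp2 sample Phi w e u - pop2 Pe Phi e u /\
      emp2 sample Phi w e u - pop2 Pe Phi e u <= rho2 / 2.
    move=> e u Phi eE Fu FP; apply: abs_bound; apply: (supR_ub _ h2).
    by exists e, u, Phi.
  move=> wh Phih [Fwh [FPh c1 c2] opt] e.
  have invs1 := inv_of_dev0 dev1s.
  have invs2 := inv_of_dev0 dev2s.
  have cs : emp_constraints sample Etr FPhi Fw rho1 rho2 Phistar w.
    split => //; apply: supR_le => _ [e1 [e2 [u [e1E e2E Fu ->]]]].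
      have := b1 e2 u Phistar e2E Fu FPs; have := b1 e1 u Phistar e1E Fu FPs.
      rewrite (invs1 e1 e2 u Fu) => -[? ?] [? ?].
      rewrite ler_norml; apply/andP; split; lra.
    have := b2 e2 u Phistar e2E Fu FPs; have := b2 e1 u Phistar e1E Fu FPs.
    rewrite (invs2 e1 e2 u Fu) => -[? ?] [? ?].
    rewrite ler_norml; apply/andP; split; lra.
  have IPh : Istar Pe FPhi Fw Phih.
    apply: contrapT => nI; have [h|h] := sep Phih FPh nI; move: h; rewrite ltNge => /negP; apply.
      apply: supR_le => _ [e1 [e2 [u [e1E e2E Fu ->]]]].
      have := b1 e2 u Phih e2E Fu FPh; have := b1 e1 u Phih e1E Fu FPh.
      have := @supR_ub R _ `|emp1 sample Phih w e1 u - emp1 sample Phih w e2 u| rho1 _ c1.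
      move=> /(_ _) /abs_bound [|? ?]; first by exists e1, e2, u.
      move=> [? ?] [? ?]; rewrite ler_norml; apply/andP; split; lra.
    apply: supR_le => _ [e1 [e2 [u [e1E e2E Fu ->]]]].
    have := b2 e2 u Phih e2E Fu FPh; have := b2 e1 u Phih e1E Fu FPh.
    have := @supR_ub R _ `|emp2 sample Phih w e1 u - emp2 sample Phih w e2 u| rho2 _ c2.
    move=> /(_ _) /abs_bound [|? ?]; first by exists e1, e2, u.
    move=> [? ?] [? ?]; rewrite ler_norml; apply/andP; split; lra.
  case: IPh => _ dev1h dev2h.
  have invh1 := inv_of_dev0 dev1h.
  have invh2 := inv_of_dev0 dev2h.
  have rk : forall u Phi e', Fw u -> FPhi Phi -> risk (Pe e') (u \o Phi) =
      expect (Pe e') (fun z => z.2 ^+ 2) + (-2 * pop1 Pe Phi e' u + pop2 Pe Phi e' u).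
    move=> u Phi e' Fu FP; have [mf If] := Ifw e' u Phi Fu FP.
    rewrite (@risk_decomp R p (Pe e') (u \o Phi) (Iy e') mf If) /pop1 /pop2; ring.
  rewrite (rk _ _ _ Fwh FPh) (rk _ _ _ wsF FPs).
  set D := (-2 * pop1 Pe Phih e wh + pop2 Pe Phih e wh) -
           (-2 * pop1 Pe Phistar e wstar + pop2 Pe Phistar e wstar).
  suff : D <= 2 * rho1 + rho2 by rewrite /D; lra.
  have L := opt wstar Phistar wsF cs.
  rewrite !loss_decomp // !big_split /= in L.
  set gh := fun e1 => -2 * emp1 sample Phih w e1 wh + emp2 sample Phih w e1 wh.
  set gs := fun e1 => -2 * emp1 sample Phistar w e1 wstar + emp2 sample Phistar w e1 wstar.
  have L' : \sum_(e1 in Etr) (n e1)%:R * gh e1 <= \sum_(e1 in Etr) (n e1)%:R * gs e1.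
    rewrite /gh /gs; lra.
  have key : \sum_(e1 in Etr) (n e1)%:R * D + \sum_(e1 in Etr) (n e1)%:R * gs e1 <=
             \sum_(e1 in Etr) (n e1)%:R * gh e1 +
             \sum_(e1 in Etr) (n e1)%:R * (2 * rho1 + rho2).
    rewrite -!big_split /=; apply: ler_sum => e1 e1E.
    rewrite -!mulrDr; apply: ler_wpM2l; first exact: ler0n.
    rewrite /D /gh /gs (invh1 e e1 wh Fwh) (invh2 e e1 wh Fwh)
      (invs1 e e1 wstar wsF) (invs2 e e1 wstar wsF).
    have [? ?] := b1 e1 wh Phih e1E Fwh FPh.
    have [? ?] := b2 e1 wh Phih e1E Fwh FPh.
    have [? ?] := b1 e1 wstar Phistar e1E wsF FPs.
    have [? ?] := b2 e1 wstar Phistar e1E wsF FPs.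
    lra.
  rewrite -!mulr_suml in key.
  set N := \sum_(e1 in Etr) (n e1)%:R in key.
  have Npos : 0 < N.
    case/set0Pn: Etr0 => e0 e0E.
    rewrite /N (bigD1 e0) //=.
    have : 0 < (n e0)%:R :> R by rewrite ltr0n npos.
    have : 0 <= \sum_(i in Etr | i != e0) (n i)%:R :> R by apply: sumr_ge0 => *; exact: ler0n.
    lra.
  have : N * D <= N * (2 * rho1 + rho2) by lra.
  by rewrite ler_pM2l.
- have fin : forall A, measurable A -> P A = (fine (P A))%:E.
    by move=> A mA; rewrite fineK // fin_num_measure.
  have mI := measurableI _ _ mB1 mB2.
  have mU := measurableU _ _ mB1 mB2.
  have U1 := probability_le1 P mU.
  have ha := fin _ mB1; have hb := fin _ mB2; have hi := fin _ mI; have hu := fin _ mU.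
  have U0 := measureUfinl mB1 mB2 (ltac:(by rewrite ha ltry) : (P B1 < +oo)%E).
  have U : P (B1 `|` B2) = (P B1 + P B2 - P (B1 `&` B2))%E := U0.
  rewrite ha hb hi hu -EFinD in U; case: U => U.
  rewrite hu lee_fin in U1; rewrite ha lee_fin in PB1; rewrite hb lee_fin in PB2.
  rewrite hi lee_fin.
  move: U U1 PB1 PB2.
  move: (fine (P B1)) (fine (P B2)) (fine (P (B1 `&` B2))) (fine (P (B1 `|` B2))) => a b i u.
  clear; move=> U U1 PB1 PB2.
  lra.
Qed.
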